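(* Let $M=(S,\mathrm{Act},P)$ be an MDP, $T\subseteq S$, $\mathrm{opt}\in\{\min,\max\}$, let $Z=\{s\in S\mid\Pr^{\mathrm{opt}}_s(\Diamond T)=0\}$, and let $r$ be the least fixed point of $\tilde D^{\mathrm{opt}}$. Then for all $s\in S$: $r(s)=0$ if and only if $s\in Z$.
   Context: An MDP is a tuple $M=(S,\mathrm{Act},P)$ with $S$ finite, $\mathrm{Act}$ finite, $P\colon S\times\mathrm{Act}\times S\to[0,1]$ with $\sum_{s'}P(s,a,s')\in\{0,1\}$; $\mathrm{Act}(s)=\{a\mid\sum_{s'}P(s,a,s')=1\}$ is nonempty for all $s$; $\mathrm{Post}(s,a)=\{s'\mid P(s,a,s')>0\}$. A strategy is $\sigma\colon S\to\mathrm{Act}$ with $\sigma(s)\in\mathrm{Act}(s)$, inducing a Markov chain with transitions $P(s,\sigma(s),\cdot)$; $\Pr^\sigma_s(\Diamond T)$ is the probability of visiting $T$ from $s$ and $\Pr^{\mathrm{opt}}_s(\Diamond T)=\mathrm{opt}_\sigma\Pr^\sigma_s(\Diamond T)$. $\mathbb{N}_\infty=\mathbb{N}\cup\{\infty\}$ with $\infty+1=\infty$. $\tilde D^{\mathrm{opt}}(r)(s)=\infty$ for $s\in T$ and $\mathrm{opt}_{a\in\mathrm{Act}(s)}\big(\min_{s'\in\mathrm{Post}(s,a)}r(s')+[\exists u,v\in\mathrm{Post}(s,a)\colon r(u)\ne r(v)]\big)$ for $s\notin T$ ($[\varphi]\in\{0,1\}$ the Iverson bracket); it is monotone w.r.t.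 the pointwise order, so its least fixed point exists. *)

(* Defs.v *)
From HB Require Import structures.
From mathcomp Require Import all_boot all_order all_algebra.
From mathcomp Require Import boolp classical_sets reals.
Set Implicit Arguments. Unset Strict Implicit. Unset Printing Implicit Defensive.
Import Order.TTheory GRing.Theory Num.Theory.
Local Open Scope ring_scope.
Local Open Scope classical_set_scope.

Section MDP.
Variables (R : realType) (S A : finType) (P : S -> A -> S -> R).

Definition is_MDP : Prop :=
  (forall s a s', 0 <= P s a s' <= 1) /\
  (forall s a, \sum_(s' : S) P s a s' = 0 \/ \sum_(s' : S) P s a s' = 1) /\
  (forall s, exists a, \sum_(s' : S) P s a s' = 1).

Definition enabled (s : S) (a : A) : bool := \sum_(s' : S) P s a s' == 1.
Definition post (s : S) (a : A) : pred S := fun s' => 0 < P s a s'.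

Definition strategy (sigma : S -> A) : Prop := forall s, enabled s (sigma s).

(* probability, in the Markov chain induced by sigma, of visiting T within
   n steps from s (sum of the probabilities of the cylinder sets). *)
Fixpoint reach_within (sigma : S -> A) (T : {set S}) (n : nat) (s : S) : R :=
  if s \in T then 1 else
  match n with
  | 0 => 0
  | n'.+1 => \sum_(s' : S) P s (sigma s) s' * reach_within sigma T n' s'
  end.

Definition Pr_reach (sigma : S -> A) (T : {set S}) (s : S) : R :=
  sup (range (fun n : nat => reach_within sigma T n s)).

Definition Pr_opt (maxopt : bool) (T : {set S}) (s : S) : R :=
  let E := (fun sigma : S -> A => Pr_reach sigma T s) @` [set sigma : S -> A | strategy sigma] in
  if maxopt then sup E else inf E.

(* N_infinity = nat + {infinity}; None stands for infinity *)
Definition ninf := option nat.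
Definition ninf_le (x y : ninf) : bool :=
  match x, y with
  | _, None => true
  | None, Some _ => false
  | Some m, Some n => (m <= n)%N
  end.
Definition ninf_min (x y : ninf) : ninf := if ninf_le x y then x else y.
Definition ninf_max (x y : ninf) : ninf := if ninf_le x y then y else x.
Definition ninf_add (x : ninf) (k : nat) : ninf :=
  match x with None => None | Some m => Some (m + k)%N end.

Definition Dtilde (maxopt : bool) (T : {set S}) (r : S -> ninf) (s : S) : ninf :=
  if s \in T then None else
  let val (a : A) : ninf :=
    ninf_add (\big[ninf_min/None]_(s' | post s a s') r s')
             (nat_of_bool [exists u, exists v,
                 [&& post s a u, post s a v & r u != r v]]) in
  if maxopt then \big[ninf_max/Some 0%N]_(a | enabled s a) val a
  else \big[ninf_min/None]_(a | enabled s a) val a.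

Definition is_lfp (F : (S -> ninf) -> (S -> ninf)) (r : S -> ninf) : Prop :=
  F r = r /\ (forall r', F r' = r' -> forall s, ninf_le (r s) (r' s)).

End MDP.

(* Main.v *)
Require Import Defs.
From HB Require Import structures.
From mathcomp Require Import all_boot all_order all_algebra.
From mathcomp Require Import boolp classical_sets reals.
From mathcomp Require Import lra.
Import Order.TTheory GRing.Theory Num.Theory.
Local Open Scope ring_scope.

Set Implicit Arguments. Unset Strict Implicit.


Lemma nle_refl x : ninf_le x x.
Proof. by case: x => //= n. Qed.
Lemma nle_trans x y z : ninf_le x y -> ninf_le y z -> ninf_le x z.
Proof. by case: x => [m|]; case: y => [n|]; case: z => [p|] //=; apply: leq_trans. Qed.
Lemma nle_total x y : ninf_le x y || ninf_le y x.
Proof. by case: x => [m|]; case: y => [n|] //=; apply: leq_total. Qed.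
Lemma nle_anti x y : ninf_le x y -> ninf_le y x -> x = y.
Proof. case: x => [m|]; case: y => [n|] //= H1 H2. by congr Some; apply/eqP; rewrite eqn_leq H1 H2. Qed.
Lemma nle0 x : ninf_le x (Some 0%N) -> x = Some 0%N.
Proof. by case: x => [[|m]|]. Qed.
Lemma nle_None x : ninf_le x None.
Proof. by case: x. Qed.

Lemma nle_not x y : ~~ ninf_le x y -> ninf_le y x.
Proof. by move=> H; have := nle_total x y; rewrite (negbTE H). Qed.

Lemma nbigmin_le (I : eqType) (l : seq I) (Pi : pred I) (F : I -> ninf) j :
  j \in l -> Pi j -> ninf_le (\big[ninf_min/None]_(i <- l | Pi i) F i) (F j).
Proof.
elim: l => // x l IH; rewrite inE big_cons => /orP [/eqP -> | jl] Pj.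
  rewrite Pj /ninf_min; case: ifP => [_|/negbT H]; first exact: nle_refl.
  exact: nle_not.
case: ifP => _; last exact: IH.
rewrite /ninf_min; case: ifP => H; last exact: IH.
exact: nle_trans H (IH jl Pj).
Qed.

Lemma nle_bigmin (I : Type) (l : seq I) (Pi : pred I) (F : I -> ninf) x :
  (forall i, Pi i -> ninf_le x (F i)) -> ninf_le x (\big[ninf_min/None]_(i <- l | Pi i) F i).
Proof.
move=> H; apply: (big_ind (fun y => ninf_le x y)) => //; first exact: nle_None.
by move=> a b Ha Hb; rewrite /ninf_min; case: ifP.
Qed.

Lemma nbigmin_in (I : Type) (l : seq I) (Pi : pred I) (F : I -> ninf) :
  \big[ninf_min/None]_(i <- l | Pi i) F i = None \/
  exists i, Pi i /\ \big[ninf_min/None]_(i <- l | Pi i) F i = F i.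
Proof.
set b := \big[_/_]_(i <- l | _) _.
have : b = None \/ exists i, Pi i /\ b = F i; last by [].
rewrite /b; apply: (big_ind (fun y => y = None \/ exists i, Pi i /\ y = F i)).
- by left.
- by move=> a c Ha Hc; rewrite /ninf_min; case: ifP.
- by move=> i Pi_i; right; exists i.
Qed.

Lemma nle_bigmax (I : eqType) (l : seq I) (Pi : pred I) (F : I -> ninf) j :
  j \in l -> Pi j -> ninf_le (F j) (\big[ninf_max/Some 0%N]_(i <- l | Pi i) F i).
Proof.
elim: l => // x l IH; rewrite inE big_cons => /orP [/eqP -> | jl] Pj.
  rewrite Pj /ninf_max; case: ifP => // H; exact: nle_refl.
case: ifP => _; last exact: IH.
rewrite /ninf_max; case: ifP => H; last first.
  apply: nle_trans (IH jl Pj) _; apply: nle_not; by rewrite H.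
exact: IH.
Qed.

Lemma nbigmax_le (I : Type) (l : seq I) (Pi : pred I) (F : I -> ninf) x :
  (forall i, Pi i -> ninf_le (F i) x) -> ninf_le (\big[ninf_max/Some 0%N]_(i <- l | Pi i) F i) x.
Proof.
move=> H; apply: (big_ind (fun y => ninf_le y x)) => //; first by case: x {H}.
by move=> a b Ha Hb; rewrite /ninf_max; case: ifP.
Qed.

Lemma nbigmax_in (I : Type) (l : seq I) (Pi : pred I) (F : I -> ninf) :
  \big[ninf_max/Some 0%N]_(i <- l | Pi i) F i = Some 0%N \/
  exists i, Pi i /\ \big[ninf_max/Some 0%N]_(i <- l | Pi i) F i = F i.
Proof.
set b := \big[_/_]_(i <- l | _) _.
have : b = Some 0%N \/ exists i, Pi i /\ b = F i; last by [].
rewrite /b; apply: (big_ind (fun y => y = Some 0%N \/ exists i, Pi i /\ y = F i)).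
- by left.
- by move=> a c Ha Hc; rewrite /ninf_max; case: ifP.
- by move=> i Pi_i; right; exists i.
Qed.

Section Tarski.
Variable S : finType.
Variable F : (S -> ninf) -> (S -> ninf).
Hypothesis Fmono : forall r1 r2, (forall s, ninf_le (r1 s) (r2 s)) -> forall s, ninf_le (F r1 s) (F r2 s).

Definition pre (q : S -> ninf) := forall s, ninf_le (F q s) (q s).

Definition Qs (s : S) : pred nat := fun n => `[< exists q, pre q /\ q s = Some n >].

Definition mt (s : S) : ninf :=
  match pselect (exists n, Qs s n) with left H => Some (ex_minn H) | right _ => None end.

Lemma mt_le q : pre q -> forall s, ninf_le (mt s) (q s).
Proof.
move=> Hq s; case E: (q s) => [n|]; last exact: nle_None.
rewrite /mt; case: pselect => [H|nH]; last first.
  by exfalso; apply: nH; exists n; apply/asboolP; exists q.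
case: ex_minnP => m _ Hm /=; apply: Hm; apply/asboolP; by exists q.
Qed.

Lemma le_mt x s : (forall q, pre q -> ninf_le x (q s)) -> ninf_le x (mt s).
Proof.
move=> H; rewrite /mt; case: pselect => [Hx|_]; last exact: nle_None.
case: ex_minnP => m /asboolP [q [Hq Eq]] _; by rewrite -Eq; apply: H.
Qed.

Lemma lfp_le_pre r : is_lfp F r -> forall p, pre p -> forall s, ninf_le (r s) (p s).
Proof.
move=> [_ Hr] p Hp s.
have Fm : forall s, ninf_le (F mt s) (mt s).
  move=> s'; apply: le_mt => q Hq; apply: nle_trans (Hq s').
  by apply: Fmono; apply: mt_le.
have Hfix : F mt = mt.
  apply: funext => s'; apply: nle_anti; first exact: Fm.
  apply: mt_le => s''; apply: Fmono; exact: Fm.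
exact: nle_trans (Hr _ Hfix s) (mt_le Hp s).
Qed.
End Tarski.

Section M2.
Local Open Scope classical_set_scope.
Variables (R : realType) (S A : finType) (P : S -> A -> S -> R).

Definition mn (r : S -> ninf) s a := \big[ninf_min/None]_(s' | post P s a s') r s'.
Definition dd (r : S -> ninf) s a := [exists u, exists v, [&& post P s a u, post P s a v & r u != r v]].
Definition vl r s a := ninf_add (mn r s a) (nat_of_bool (dd r s a)).

Lemma DtildeE mx T r s : Dtilde P mx T r s =
  if s \in T then None else if mx then \big[ninf_max/Some 0%N]_(a | enabled P s a) vl r s a
  else \big[ninf_min/None]_(a | enabled P s a) vl r s a.
Proof. by []. Qed.

Lemma mn_le r s a x : post P s a x -> ninf_le (mn r s a) (r x).
Proof. by move=> Hx; apply: nbigmin_le => //; rewrite mem_index_enum. Qed.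

Lemma vl_mono r1 r2 s a : (forall x, ninf_le (r1 x) (r2 x)) -> ninf_le (vl r1 s a) (vl r2 s a).
Proof.
move=> H.
have Hm : ninf_le (mn r1 s a) (mn r2 s a).
  by apply: nle_bigmin => i Pi; apply: nle_trans (mn_le r1 Pi) (H i).
rewrite /vl; case E2: (mn r2 s a) Hm => [n2|]; last by move=> _; apply: nle_None.
case E1: (mn r1 s a) => [n1|] //= Hn.
have b1 := leq_b1 (dd r1 s a).
case: (ltngtP n1 n2) Hn => // [Hlt|Heq] _.
  by apply: (leq_trans (n := n1 + 1)%N); [rewrite leq_add2l | rewrite addn1 (leq_trans Hlt) // leq_addr].
subst n2; case D1: (dd r1 s a); last by rewrite addn0 leq_addr.
suff -> : dd r2 s a by [].
move/existsP: D1 => [u /existsP [v /and3P [pu pv ruv]]].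
have [x [px rx]] : exists x, post P s a x /\ r1 x != Some n1.
  case: (eqVneq (r1 u) (Some n1)) => Eu; last by exists u.
  by exists v; split => //; rewrite -Eu eq_sym.
have [|[w [pw Ew]]] := nbigmin_in (index_enum S) (post P s a) r2.
  by rewrite -/(mn r2 s a) E2.
apply/existsP; exists w; apply/existsP; exists x; rewrite pw px /=.
rewrite -Ew -/(mn r2 s a) E2; apply/eqP => E.
move/eqP: rx; apply; apply: nle_anti.
  by have := H x; rewrite -E.
by rewrite -E1; apply: mn_le.
Qed.

Lemma Dtilde_mono mx T r1 r2 : (forall x, ninf_le (r1 x) (r2 x)) ->
  forall s, ninf_le (Dtilde P mx T r1 s) (Dtilde P mx T r2 s).
Proof.
move=> H s; rewrite !DtildeE; case: (s \in T) => //; case: mx.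
  apply: nbigmax_le => a Ea; apply: nle_trans (vl_mono s a H) _.
  by apply: nle_bigmax => //; rewrite mem_index_enum.
apply: nle_bigmin => a Ea; apply: nle_trans (vl_mono s a H).
by apply: nbigmin_le => //; rewrite mem_index_enum.
Qed.
End M2.

Section M3.
Local Open Scope classical_set_scope.
Variables (R : realType) (S A : finType) (P : S -> A -> S -> R).
Hypothesis HM : is_MDP P.

Lemma P_ge0 s a x : 0 <= P s a x.
Proof. by case: HM => H _; case/andP: (H s a x). Qed.
Lemma P_le1 s a x : P s a x <= 1.
Proof. by case: HM => H _; case/andP: (H s a x). Qed.

Lemma notpost0 s a x : ~~ post P s a x -> P s a x = 0.
Proof. by rewrite /post -leNgt => H; apply/eqP; rewrite eq_le H P_ge0. Qed.

Lemma post_ne s a : enabled P s a -> exists x, post P s a x.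
Proof.
move=> /eqP H; apply: contrapT => Hn.
have : \sum_(x : S) P s a x = 0.
  apply: big1 => x _; apply: notpost0; apply/negP => Hx; apply: Hn; by exists x.
by rewrite H => /eqP; rewrite oner_eq0.
Qed.

Lemma rw_ge0 sigma T n s : 0 <= reach_within P sigma T n s.
Proof.
elim: n s => [|n IH] s /=; case: (s \in T) => //.
by apply: sumr_ge0 => x _; apply: mulr_ge0; [apply: P_ge0 | apply: IH].
Qed.

Lemma rw_le1 sigma T n s : strategy P sigma -> reach_within P sigma T n s <= 1.
Proof.
move=> Hs; elim: n s => [|n IH] s /=; case: (s \in T) => //.
rewrite -(eqP (Hs s)); apply: ler_sum => x _.
by rewrite -[leRHS]mulr1; apply: ler_wpM2l; [apply: P_ge0 | apply: IH].
Qed.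

Lemma rw_zero sigma (T : {set S}) (Z : pred S) :
  (forall s, Z s -> s \notin T /\ forall x, post P s (sigma s) x -> Z x) ->
  forall n s, Z s -> reach_within P sigma T n s = 0.
Proof.
move=> HZ; elim=> [|n IH] s Zs /=; have [/negbTE -> Hp] := HZ s Zs => //.
apply: big1 => x _; case: (boolP (post P s (sigma s) x)) => Hx.
  by rewrite IH ?mulr0 //; apply: Hp.
by rewrite notpost0 // mul0r.
Qed.

Lemma has_ub_rw sigma T s : strategy P sigma ->
  has_ubound (range (fun n => reach_within P sigma T n s)).
Proof. by move=> Hs; exists 1 => y [n _ <-]; apply: rw_le1. Qed.

Lemma Pr_ge_rw sigma T n s : strategy P sigma ->
  reach_within P sigma T n s <= Pr_reach P sigma T s.
Proof. by move=> Hs; apply: ub_le_sup; [apply: has_ub_rw | exists n]. Qed.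

Lemma Pr_ge0 sigma T s : strategy P sigma -> 0 <= Pr_reach P sigma T s.
Proof. by move=> Hs; apply: le_trans (Pr_ge_rw T 0 s Hs); apply: rw_ge0. Qed.

Lemma Pr_le1 sigma T s : strategy P sigma -> Pr_reach P sigma T s <= 1.
Proof.
move=> Hs; apply: ge_sup; first by exists (reach_within P sigma T 0 s); exists 0%N.
by move=> y [n _ <-]; apply: rw_le1.
Qed.

Lemma Pr_zero sigma T s : strategy P sigma -> (forall n, reach_within P sigma T n s = 0) ->
  Pr_reach P sigma T s = 0.
Proof.
move=> Hs H0; apply/eqP; rewrite eq_le Pr_ge0 // andbT.
apply: ge_sup; first by exists (reach_within P sigma T 0 s); exists 0%N.
by move=> y [n _ <-]; rewrite H0.
Qed.

Lemma exists_strategy : exists sigma, strategy P sigma.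
Proof.
case: HM => _ [_ H].
case: (pickP (fun _ : A => true)) => [a0 _|HA]; last first.
  have [s _|HS] := pickP (fun _ : S => true).
    by case: (H s) => a _; move: (HA a).
  exists (fun s => False_rect A (Bool.diff_true_false (HS s))) => s.
  by case: (Bool.diff_true_false (HS s)).
exists (fun s => if [pick a | enabled P s a] is Some a then a else a0) => s.
case: pickP => // Hn; case: (H s) => a Ea; have := Hn a; by rewrite /= /enabled Ea eqxx.
Qed.
End M3.

Section M4.
Local Open Scope classical_set_scope.
Variables (R : realType) (S A : finType) (P : S -> A -> S -> R).
Hypothesis HM : is_MDP P.

Fixpoint lev (mx : bool) (T : {set S}) (k : nat) (s : S) : bool :=
  (s \in T) || match k with 0 => false | k'.+1 =>
    if mx then [exists a, enabled P s a && [exists x, post P s a x && lev mx T k' x]]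
    else [forall a, enabled P s a ==> [exists x, post P s a x && lev mx T k' x]] end.

Lemma lev_S mx T k s : lev mx T k s -> lev mx T k.+1 s.
Proof.
elim: k s => [|k IH] s; first by rewrite /= orbF => ->.
rewrite [lev mx T k.+1 s]/= [lev mx T k.+2 s]/=; case: (s \in T) => //=.
case: mx IH => IH.
  case/existsP => a /andP [Ea /existsP [x /andP [px lx]]].
  by apply/existsP; exists a; rewrite Ea; apply/existsP; exists x; rewrite px /=; exact: (IH _ lx).
move/forallP => H; apply/forallP => a; apply/implyP => Ea.
move/implyP: (H a) => /(_ Ea) /existsP [x /andP [px lx]].
by apply/existsP; exists x; rewrite px /=; exact: (IH _ lx).
Qed.

Lemma lev_mono mx T k j s : (k <= j)%N -> lev mx T k s -> lev mx T j s.
Proof.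
move=> /subnK <-; elim: (j - k)%N => // n IH H.
by rewrite addSn; apply: lev_S; apply: IH.
Qed.

Definition Cset mx T s := `[< forall k, ~~ lev mx T k s >].
Definition pdef mx T s : ninf := if Cset mx T s then Some 0%N else None.

Lemma vl_zero (r : S -> ninf) s a : enabled P s a ->
  (forall x, post P s a x -> r x = Some 0%N) -> vl P r s a = Some 0%N.
Proof.
move=> Ea H; have [x px] := post_ne HM Ea; rewrite /vl.
have -> : mn P r s a = Some 0%N by apply: nle0; rewrite -(H x px); apply: mn_le.
have -> : dd P r s a = false.
  apply/negbTE/existsP => [[u /existsP [v /and3P [pu pv]]]].
  by rewrite (H u pu) (H v pv) eqxx.
by [].
Qed.

Lemma gather (Q : nat -> A -> bool) (E : pred A) :
  (forall k a, Q k a -> Q k.+1 a) ->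
  forall l : seq A, (forall a, a \in l -> E a -> exists k, Q k a) ->
  exists K, forall a, a \in l -> E a -> Q K a.
Proof.
move=> HQ.
have Hm : forall k j a, (k <= j)%N -> Q k a -> Q j a.
  move=> k j a /subnK <-; elim: (j - k)%N => // n IH H.
  by rewrite addSn; apply: HQ; apply: IH.
elim=> [|b l IH] H; first by exists 0%N.
have [K HK] : exists K, forall a, a \in l -> E a -> Q K a.
  by apply: IH => a al; apply: H; rewrite inE al orbT.
case: (boolP (E b)) => Eb.
  have [k Hk] := H b (mem_head _ _) Eb.
  exists (maxn K k) => a; rewrite inE => /orP [/eqP -> _|al Ea].
    by apply: Hm Hk; rewrite leq_maxr.
  by apply: Hm (HK a al Ea); rewrite leq_maxl.
exists K => a; rewrite inE => /orP [/eqP ->|]; first by rewrite (negbTE Eb).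
exact: HK.
Qed.

Lemma pdef_pre mx T : pre (Dtilde P mx T) (pdef mx T).
Proof.
move=> s; rewrite {2}/pdef; case: ifP => [/asboolP Cs|_]; last exact: nle_None.
have sT : s \notin T by have := Cs 0%N; rewrite /= orbF.
have Cpost : forall x, `[< forall k, ~~ lev mx T k x >] -> pdef mx T x = Some 0%N.
  by move=> x Hx; rewrite /pdef /Cset Hx.
rewrite DtildeE (negbTE sT); case: mx Cs sT Cpost => Cs sT Cpost.
  apply: nbigmax_le => a Ea; rewrite vl_zero //.
  move=> x px; apply: Cpost; apply/asboolP => k; apply/negP => lx.
  move: (Cs k.+1); rewrite /= (negbTE sT) /=; apply/negP/negPn.
  by apply/existsP; exists a; rewrite Ea; apply/existsP; exists x; rewrite px.
have [a [Ea Ha]] : exists a, enabled P s a /\ forall x, post P s a x -> pdef false T x = Some 0%N.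
  apply: contrapT => Hn.
  have H1 : forall a, a \in enum A -> enabled P s a ->
      exists k, [exists x, post P s a x && lev false T k x].
    move=> a _ Ea; apply: contrapT => Hk; apply: Hn; exists a; split => // x px.
    apply: Cpost; apply/asboolP => k; apply/negP => lx; apply: Hk; exists k.
    by apply/existsP; exists x; rewrite px.
  have HQ : forall k a, [exists x, post P s a x && lev false T k x] ->
                        [exists x, post P s a x && lev false T k.+1 x].
    move=> k a /existsP [x /andP [px lx]]; apply/existsP; exists x.
    by rewrite px (lev_S lx).
  have [K HK] := gather HQ H1.
  move: (Cs K.+1); rewrite /= (negbTE sT) /=; apply/negP/negPn.
  apply/forallP => a; apply/implyP => Ea; apply: HK => //; exact: mem_enum.
apply: nle_trans (_ : ninf_le _ (vl P (pdef false T) s a)) _.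
  by apply: nbigmin_le => //; rewrite mem_index_enum.
by rewrite vl_zero.
Qed.
End M4.

Section M5.
Local Open Scope classical_set_scope.
Variables (R : realType) (S A : finType) (P : S -> A -> S -> R).
Hypothesis HM : is_MDP P.

Lemma vl0_post (r : S -> ninf) s a : vl P r s a = Some 0%N ->
  forall x, post P s a x -> r x = Some 0%N.
Proof.
rewrite /vl; case E: (mn P r s a) => [n|] //; case D: (dd P r s a) => //=.
  by rewrite addn1.
rewrite addn0 => -[En]; subst n => x px.
have [|[w [pw Ew]]] := nbigmin_in (index_enum S) (post P s a) r.
  by rewrite -/(mn P r s a) E.
have Ew' : r w = Some 0%N by rewrite -Ew -/(mn P r s a) E.
apply/eqP; rewrite -Ew'; apply/negP => /negP Hne; move/negbT: D => /negP; apply.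
apply/existsP; exists w; apply/existsP; exists x; by rewrite pw px eq_sym.
Qed.

Lemma sum_ge (F : S -> R) x : (forall y, 0 <= F y) -> F x <= \sum_y F y.
Proof. by move=> H; rewrite (bigD1 x) //= lerDl sumr_ge0. Qed.

Lemma dir1 mx T r s : Dtilde P mx T r = r -> r s = Some 0%N -> Pr_opt P mx T s = 0.
Proof.
move=> Hr rs.
have Z0 : forall s', r s' = Some 0%N -> s' \notin T.
  by move=> s' E; apply/negP => sT; move: E; rewrite -Hr DtildeE sT.
have [sig0 Hsig0] := exists_strategy HM.
rewrite /Pr_opt; case: mx Hr => Hr.
  have Zp : forall s', r s' = Some 0%N -> forall a, enabled P s' a ->
                forall x, post P s' a x -> r x = Some 0%N.
    move=> s' E a Ea; apply: vl0_post; apply: nle0.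
    have E' : Dtilde P true T r s' = Some 0%N by rewrite Hr.
    rewrite DtildeE (negbTE (Z0 _ E)) in E'; rewrite -E'.
    by apply: nle_bigmax => //; rewrite mem_index_enum.
  have Hall : forall sigma, strategy P sigma -> Pr_reach P sigma T s = 0.
    move=> sigma Hs; apply: (Pr_zero HM) => // n.
    apply: (rw_zero HM (Z := fun x => r x == Some 0%N)); last exact/eqP.
    move=> s' /eqP E; split; first exact: Z0.
    by move=> x px; apply/eqP; apply: Zp px.
  apply/eqP; rewrite eq_le; apply/andP; split.
    apply: ge_sup; first by exists (Pr_reach P sig0 T s); exists sig0.
    by move=> y [sigma Hs <-]; rewrite Hall.
  have -> : 0 = Pr_reach P sig0 T s by rewrite Hall.
  apply: ub_le_sup; last by exists sig0.
  by exists 0 => y [sigma Hs <-]; rewrite Hall.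
have Zp : forall s', r s' = Some 0%N -> exists a, enabled P s' a /\
              forall x, post P s' a x -> r x = Some 0%N.
  move=> s' E; have E' : Dtilde P false T r s' = Some 0%N by rewrite Hr.
  move: E'; rewrite DtildeE (negbTE (Z0 _ E)).
  have [->//|[a [Ea ->]] H] := nbigmin_in (index_enum A) (enabled P s') (vl P r s').
  by exists a; split => //; apply: vl0_post.
pose sigma s' := if [pick a | enabled P s' a && [forall x, post P s' a x ==> (r x == Some 0%N)]]
  is Some a then a else sig0 s'.
have Hs : strategy P sigma.
  by move=> s'; rewrite /sigma; case: pickP => [a /andP []|_] //.
have Hp : Pr_reach P sigma T s = 0.
  apply: (Pr_zero HM) => // n.
  apply: (rw_zero HM (Z := fun x => r x == Some 0%N)); last exact/eqP.
  move=> s' /eqP E; split; first exact: Z0.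
  rewrite /sigma; case: pickP => [a /andP [_ /forallP H] x px|Hn].
    by move/implyP: (H x) => /(_ px).
  have [a [Ea Ha]] := Zp s' E; move: (Hn a); rewrite Ea /=.
  move/negbT/negP => F; exfalso; apply: F; apply/forallP => x; apply/implyP => px.
  by rewrite Ha.
have lb : has_lbound ((fun sigma => Pr_reach P sigma T s) @` [set sigma | strategy P sigma]).
  by exists 0 => y [sg Hsg <-]; exact: (Pr_ge0 HM).
apply/eqP; rewrite eq_le; apply/andP; split.
  rewrite -Hp; apply: ge_inf => //; by exists sigma.
apply: lb_le_inf; first by exists (Pr_reach P sig0 T s); exists sig0.
by move=> y [sg Hsg <-]; exact: (Pr_ge0 HM).
Qed.
End M5.

Section M6.
Local Open Scope classical_set_scope.
Variables (R : realType) (S A : finType) (P : S -> A -> S -> R).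
Hypothesis HM : is_MDP P.

Lemma rw_step sigma (T : {set S}) n s x : s \notin T ->
  P s (sigma s) x * reach_within P sigma T n x <= reach_within P sigma T n.+1 s.
Proof.
move=> sT; rewrite /= (negbTE sT).
have H := @sum_ge R S (fun y => P s (sigma s) y * reach_within P sigma T n y) x.
apply: H => y; apply: mulr_ge0; [apply: (P_ge0 HM) | exact: rw_ge0].
Qed.

Lemma dir2_max T k s : lev P true T k s -> 0 < Pr_opt P true T s.
Proof.
move=> Hk.
have [sig0 Hsig0] := exists_strategy HM.
pose jm s' := match pselect (exists k, lev P true T k s') with
  left H => ex_minn H | right _ => 0%N end.
pose sigma s' := if [pick a | enabled P s' a &&
     [exists x, post P s' a x && lev P true T (jm s').-1 x]] is Some a then a else sig0 s'.
have Hs : strategy P sigma.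
  by move=> s'; rewrite /sigma; case: pickP => [a /andP []|_] //.
have key : forall k s, lev P true T k s -> 0 < reach_within P sigma T k s.
  elim=> [|k' IH] s' H.
    by move: H; rewrite /= orbF => ->.
  case sT: (s' \in T); first by rewrite /= sT.
  have HJ : lev P true T (jm s') s' /\ (jm s' <= k'.+1)%N.
    rewrite /jm; case: pselect => [Hex|Hn]; last first.
      by exfalso; apply: Hn; exists k'.+1.
    by case: ex_minnP => m Hm Hmin; split => //; apply: Hmin.
  case Hjm: (jm s') HJ => [|j] [Hj jle]; first by move: Hj; rewrite /= sT.
  move: (Hj); rewrite /= sT /= => Hex.
  have [x px lx] : exists2 x, post P s' (sigma s') x & lev P true T j x.
    rewrite /sigma; case: pickP => [a /andP [_ /existsP [x /andP [px lx]]]|Hn].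
      by exists x => //; move: lx; rewrite Hjm.
    exfalso; case/existsP: Hex => a /andP [Ea Hx]; move: (Hn a); rewrite Ea Hjm /=.
    by rewrite Hx.
  have Hle := @rw_step sigma T k' s' x (negbT sT); move: Hle; rewrite /= sT => Hle; apply: (lt_le_trans _ Hle).
  apply: mulr_gt0; first exact: px.
  by apply: IH; apply: lev_mono lx.
rewrite /Pr_opt; apply: lt_le_trans (key k s Hk) _.
apply: le_trans (Pr_ge_rw HM T k s Hs) _.
apply: ub_le_sup; last by exists sigma.
by exists 1 => y [sg Hsg <-]; apply: (Pr_le1 HM).
Qed.
Lemma bigminR_le (I : eqType) (l : seq I) (Pi : pred I) (F : I -> R) j :
  j \in l -> Pi j -> \big[Order.min/1]_(i <- l | Pi i) F i <= F j.
Proof.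
elim: l => // x l IH; rewrite inE big_cons => /orP [/eqP -> | jl] Pj.
  by rewrite Pj ge_min lexx.
case: ifP => _; last exact: IH.
by rewrite ge_min (IH jl Pj) orbT.
Qed.

Definition cmin := \big[Order.min/1]_(x : S * A * S | 0 < P x.1.1 x.1.2 x.2) P x.1.1 x.1.2 x.2.

Lemma cmin_gt0 : 0 < cmin.
Proof.
apply: (big_ind (fun y : R => 0 < y)) => //.
by move=> a b Ha Hb; rewrite lt_min Ha Hb.
Qed.

Lemma cmin_le1 : cmin <= 1.
Proof.
apply: (big_ind (fun y => y <= 1)) => //.
  by move=> a b Ha Hb; rewrite ge_min Ha.
by move=> i _; apply: (P_le1 HM).
Qed.

Lemma cmin_le s a x : post P s a x -> cmin <= P s a x.
Proof.
move=> px; have := @bigminR_le _ _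
  (fun x : S * A * S => 0 < P x.1.1 x.1.2 x.2) (fun x => P x.1.1 x.1.2 x.2) (s, a, x)
  (mem_index_enum (s, a, x)) px.
by [].
Qed.

Lemma dir2_min T k s : lev P false T k s -> 0 < Pr_opt P false T s.
Proof.
move=> Hk.
have [sig0 Hsig0] := exists_strategy HM.
have key : forall k s, lev P false T k s -> forall sigma, strategy P sigma ->
    cmin ^+ k <= reach_within P sigma T k s.
  elim=> [|k' IH] s' H sigma Hs.
    by move: H; rewrite /= orbF => ->; rewrite expr0.
  case sT: (s' \in T).
    by rewrite /= sT; apply: exprn_ile1; [apply: ltW; apply: cmin_gt0 | apply: cmin_le1].
  move: (H); rewrite /= sT /= => /forallP /(_ (sigma s')) /implyP /(_ (Hs s')).
  case/existsP => x /andP [px lx].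
  have Hle := @rw_step sigma T k' s' x (negbT sT).
  move: Hle; rewrite /= sT => Hle; apply: le_trans Hle.
  rewrite exprS; apply: ler_pM.
  - by apply: ltW; apply: cmin_gt0.
  - by apply: exprn_ge0; apply: ltW; apply: cmin_gt0.
  - exact: cmin_le.
  - exact: IH.
rewrite /Pr_opt; apply: (lt_le_trans (exprn_gt0 k cmin_gt0)).
apply: lb_le_inf; first by exists (Pr_reach P sig0 T s); exists sig0.
move=> y [sg Hsg <-]; apply: le_trans (Pr_ge_rw HM T k s Hsg).
exact: key.
Qed.
End M6.

Unset Implicit Arguments. Set Strict Implicit.

Theorem lemma9 (R : realType) (S A : finType) (P : S -> A -> S -> R)
  (T : {set S}) (maxopt : bool) (r : S -> ninf) :
  is_MDP P ->
  is_lfp (Dtilde P maxopt T) r ->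
  forall s : S, r s = Some 0%N <-> Pr_opt P maxopt T s = 0.
Proof.
move=> HM Hl s; split.
  by apply: dir1 => //; case: Hl.
move=> H0.
case: (pselect (exists k, lev P maxopt T k s)) => [[k Hk]|Hn].
  exfalso; move: H0; apply/eqP; rewrite gt_eqF //.
  by case: maxopt Hl Hk => Hl Hk; [apply: dir2_max Hk | apply: dir2_min Hk].
apply: nle0.
have Hp := pdef_pre HM maxopt T.
have := lfp_le_pre (@Dtilde_mono R S A P maxopt T) Hl Hp s.
rewrite /pdef /Cset; case: ifP => // /negbT /asboolP [].
move=> k; apply/negP => lk; apply: Hn; by exists k.
Qed.
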